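(* For every non-empty context $\Gamma$ and formula $A$: if the sequent $\Gamma\vdash A$ is derivable in the sequent calculus, then $\varphi(\Gamma)\le A$ in the Tamari order.
   Context: Formulas are built from atoms ($p,q,\dots$) by a binary product: every formula is an atom or $A\bullet B$ for formulas $A,B$. A context is a finite (possibly empty) list of formulas; commas denote concatenation. A sequent $\Gamma\vdash A$ is a context with a formula. The sequent calculus has exactly four rules (no weakening, contraction or exchange): ($\bullet L$) from $A,B,\Delta\vdash C$ infer $A\bullet B,\Delta\vdash C$ (the product must be the leftmost formula); ($\bullet R$) from $\Gamma\vdash A$ and $\Delta\vdash B$ infer $\Gamma,\Delta\vdash A\bullet B$; ($id$) $A\vdash A$; ($cut$) from $\Theta\vdash A$ and $\Gamma,A,\Delta\vdash B$ infer $\Gamma,\Theta,\Delta\vdash B$. A sequent is derivable if it is the conclusion of a finite derivation tree built from these rules with no undischarged premises. The Tamari order $\le$ on formulas is the least preorder such that $(A\bullet B)\bullet C\le A\bullet(B\bullet C)$ for all $A,B,C$, and $A_1\le A_2$, $B_1\le B_2$ imply $A_1\bullet B_1\le A_2\bullet B_2$. For a non-empty context, $\varphi$ is its left-associated product: $\varphi(A)=A$ and $\varphi(\Gamma,A)=\varphi(\Gamma)\bullet A$; so $\varphi(A_0,A_1,\dots,A_n)=(\cdots(A_0\bullet A_1)\bullet\cdots)\bullet A_n$. *)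

(* Defs.v *)
From Stdlib Require Import List.
Import ListNotations.

Inductive formula : Type :=
| Atom : nat -> formula
| Prod : formula -> formula -> formula.

Definition context := list formula.

Inductive derivable : context -> formula -> Prop :=
| d_prodL : forall A B Delta C,
    derivable (A :: B :: Delta) C ->
    derivable (Prod A B :: Delta) C
| d_prodR : forall Gamma Delta A B,
    derivable Gamma A -> derivable Delta B ->
    derivable (Gamma ++ Delta) (Prod A B)
| d_id : forall A, derivable [A] A
| d_cut : forall Theta Gamma Delta A B,
    derivable Theta A ->
    derivable (Gamma ++ A :: Delta) B ->
    derivable (Gamma ++ Theta ++ Delta) B.

Inductive tamari_le : formula -> formula -> Prop :=
| t_refl : forall A, tamari_le A A
| t_trans : forall A B C, tamari_le A B -> tamari_le B C -> tamari_le A C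
| t_assoc : forall A B C, tamari_le (Prod (Prod A B) C) (Prod A (Prod B C))
| t_mono : forall A1 A2 B1 B2,
    tamari_le A1 A2 -> tamari_le B1 B2 ->
    tamari_le (Prod A1 B1) (Prod A2 B2).

(* Left-associated product of a non-empty context A0, A1, ..., An:
   phi A0 [A1;...;An] = (...(A0 . A1) . ...) . An *)
Definition phi (A0 : formula) (rest : context) : formula :=
  fold_left Prod rest A0.

(* Main.v *)
Require Import Defs.
From Stdlib Require Import List.
Import ListNotations.

Lemma der_nonempty : forall G A, derivable G A -> G <> [].
Proof.
  induction 1; try discriminate.
  - destruct Gamma; simpl; [exact IHderivable2 | discriminate].
  - destruct Gamma; simpl; [|discriminate].
    destruct Theta; simpl; [contradiction|discriminate].
Qed.

Lemma fold_mono : forall r X Y, tamari_le X Y ->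
  tamari_le (fold_left Prod r X) (fold_left Prod r Y).
Proof.
  induction r; simpl; intros; auto.
  apply IHr. apply t_mono; auto. apply t_refl.
Qed.

Lemma fold_assoc : forall d X Y,
  tamari_le (fold_left Prod d (Prod X Y)) (Prod X (fold_left Prod d Y)).
Proof.
  induction d; simpl; intros. apply t_refl.
  eapply t_trans. apply fold_mono. apply t_assoc. apply IHd.
Qed.

Lemma main : forall G A, derivable G A ->
  forall A0 rest, G = A0 :: rest -> tamari_le (phi A0 rest) A.
Proof.
  unfold phi.
  induction 1; intros A0 rest E.
  - inversion E; subst. simpl in IHderivable. apply (IHderivable A (B :: rest)); reflexivity.
  - destruct Delta as [|D0 d]. { exfalso; exact (der_nonempty _ _ H0 eq_refl). }
    destruct Gamma as [|G0 g]. { exfalso; exact (der_nonempty _ _ H eq_refl). }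
    simpl in E; inversion E; subst.
    rewrite fold_left_app.
    eapply t_trans. apply fold_assoc.
    apply t_mono; [apply IHderivable1 | apply IHderivable2]; reflexivity.
  - inversion E; subst. apply t_refl.
  - destruct Theta as [|T0 t]. { exfalso; exact (der_nonempty _ _ H eq_refl). }
    destruct Gamma as [|G0 g].
    + simpl in E; inversion E; subst.
      rewrite fold_left_app. eapply t_trans. apply fold_mono. apply (IHderivable1 A0 t eq_refl).
      apply (IHderivable2 A Delta eq_refl).
    + simpl in E; inversion E; subst.
      rewrite fold_left_app. simpl. rewrite fold_left_app.
      eapply t_trans. apply fold_mono. apply fold_assoc.
      eapply t_trans. apply fold_mono. apply t_mono. apply t_refl.
      apply (IHderivable1 T0 t eq_refl).
      specialize (IHderivable2 A0 (g ++ A :: Delta) eq_refl).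
      rewrite fold_left_app in IHderivable2. exact IHderivable2.
Qed.

Theorem theorem1p6 : forall (A0 : formula) (rest : context) (A : formula),
  derivable (A0 :: rest) A -> tamari_le (phi A0 rest) A.
Proof.
  intros. eapply main; eauto.
Qed.
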